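(* Let $V$ be an $n$-dimensional complex Hilbert space with orthonormal basis $\{\lvert\psi_i\rangle\}_{i=1}^n$, and let $u$ be an $n\times n$ complex matrix with singular value decomposition $u = L D R$, where $L,R$ are unitary and $D=\mathrm{diag}(\sigma_1,\dots,\sigma_n)$ with $1\ge \sigma_1\ge\cdots\ge\sigma_n\ge 0$. Let $\epsilon_1,\dots,\epsilon_n$ be real numbers with $\tilde\sigma_j:=\sigma_j+\epsilon_j\in[0,1]$ for all $j$, and let $\tilde u$ be the matrix $\tilde u_{ij}=\sum_{k=1}^n \tilde\sigma_k L_{ik}R_{kj}$. Let $\mathbf{u}=\sum_{i,j} u_{ij}\lvert\psi_i\rangle\langle\psi_j\rvert$ and $\tilde{\mathbf{u}}=\sum_{i,j}\tilde u_{ij}\lvert\psi_i\rangle\langle\psi_j\rvert$ be the associated linear maps $V\to V$. Then, in the operator 2-norm on $\wedge V$, $$\|\wedge\mathbf{u}-\wedge\tilde{\mathbf{u}}\|\le \sum_{j=1}^n |\epsilon_j|.$$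
   Context: The exterior algebra (Fock space) $\wedge V=\bigoplus_{k\ge 0}\wedge^k V$ is the Hilbert space with orthonormal basis $\{\lvert\psi_{i_1}\rangle\wedge\cdots\wedge\lvert\psi_{i_k}\rangle : 1\le i_1<\cdots<i_k\le n,\ k\ge 0\}$. For a linear map $\mathbf{u}:V\to V$, the wedged map $\wedge\mathbf{u}:\wedge V\to\wedge V$ is the linear map defined on this basis by $\wedge\mathbf{u}(\lvert\psi_{i_1}\rangle\wedge\cdots\wedge\lvert\psi_{i_k}\rangle)=\mathbf{u}\lvert\psi_{i_1}\rangle\wedge\cdots\wedge\mathbf{u}\lvert\psi_{i_k}\rangle$ (with the empty wedge, $k=0$, mapped to itself). *)

(* Defs.v *)
From HB Require Import structures.
From mathcomp Require Import all_boot all_order all_algebra.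
Set Implicit Arguments. Unset Strict Implicit. Unset Printing Implicit Defensive.
Import Order.TTheory GRing.Theory Num.Theory.
Local Open Scope ring_scope.

(* V = C^n with orthonormal basis psi_i = the standard basis vectors;
   C is any numeric closed field (e.g. the complex numbers). *)

(* The Fock space /\V, in coordinates w.r.t. its orthonormal basis
   { psi_{i_1} /\ ... /\ psi_{i_k} : i_1 < ... < i_k }, indexed by the
   subset S = {i_1,...,i_k} of 'I_n. *)
Definition fock (C : numClosedFieldType) (n : nat) := {set 'I_n} -> C.

(* the i-th coordinate of a column vector (0 when i >= n) *)
Definition vec_at (C : numClosedFieldType) n (v : 'cV[C]_n) (i : nat) : C :=
  if insub i is Some j then v j 0 else 0.

Definition sorted_elems n (S : {set 'I_n}) : seq nat := [seq val i | i <- enum S].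

(* v_0 /\ ... /\ v_{k-1} in /\V: its coordinate on the basis element
   psi_{s_0} /\ ... /\ psi_{s_{k-1}} (s_0 < ... < s_{k-1}) is det [v_b(s_a)]_{a,b},
   and it has no component outside /\^k V. *)
Definition wedge (C : numClosedFieldType) n k (v : 'I_k -> 'cV[C]_n) : fock C n :=
  fun S => if #|S| == k then
             \det (\matrix_(a < k, b < k) vec_at (v b) (nth 0%N (sorted_elems S) a))
           else 0.

(* /\u : the linear map on /\V sending psi_{t_0} /\ ... /\ psi_{t_{k-1}}
   (t_0 < ... < t_{k-1} the elements of T) to u psi_{t_0} /\ ... /\ u psi_{t_{k-1}},
   extended linearly. (u psi_t is the t-th column of u; enum_val enumerates T
   increasingly.) *)
Definition wedge_map (C : numClosedFieldType) n (u : 'M[C]_n) (x : fock C n) : fock C n :=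
  fun S => \sum_(T : {set 'I_n})
             x T * wedge (fun b : 'I_#|T| => col (@enum_val _ (pred_of_set T) b) u) S.

Definition fock_norm (C : numClosedFieldType) n (x : fock C n) : C :=
  sqrtC (\sum_(S : {set 'I_n}) `|x S| ^+ 2).

Definition adjmx (C : numClosedFieldType) n (A : 'M[C]_n) : 'M[C]_n :=
  (map_mx (fun z => z^*) A)^T.
Definition unitary (C : numClosedFieldType) n (A : 'M[C]_n) : Prop :=
  A *m adjmx A = 1%:M /\ adjmx A *m A = 1%:M.

(* Main.v *)
Require Import Defs.
From HB Require Import structures.
From mathcomp Require Import all_boot all_order all_algebra.
From mathcomp Require Import fingroup perm.
From mathcomp Require Import ring.
Set Implicit Arguments. Unset Strict Implicit. Unset Printing Implicit Defensive.
Import Order.TTheory GRing.Theory Num.Theory.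
Local Open Scope ring_scope.

Section CBsec.
Variable R : comNzRingType.
Variable n : nat.
Variable x0 : 'I_n.

Definition ev (U : {set 'I_n}) (i : nat) : 'I_n := nth x0 (enum U) i.

Lemma det_mul_expand k (A : 'M[R]_(k, n)) (B : 'M[R]_(n, k)) :
  \det (A *m B) = \sum_(f : ('I_n ^ k)%type)
     (\prod_i A i (f i)) * \det (\matrix_(i, j) B (f i) j).
Proof.
rewrite /(\det (A *m B)).
transitivity (\sum_(s : 'S_k) \sum_(f : ('I_n ^ k)%type)
   (-1) ^+ s * \prod_i (A i (f i) * B (f i) (s i))).
  apply: eq_bigr => s _; rewrite -big_distrr /=; congr (_ * _).
  rewrite -(bigA_distr_bigA (fun i j => A i j * B j (s i))) /=.
  by apply: eq_bigr => i _; rewrite mxE.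
rewrite exchange_big; apply: eq_bigr => f _ /=.
rewrite big_distrr /=; apply: eq_bigr => s _.
by rewrite big_split /= mulrCA; congr (_ * (_ * _)); apply: eq_bigr => i _; rewrite mxE.
Qed.


Lemma det_row_permE k (s : 'S_k) (M : 'M[R]_k) :
  \det (\matrix_(i, j) M (s i) j) = (-1) ^+ s * \det M.
Proof.
have -> : \matrix_(i, j) M (s i) j = row_perm s M by apply/matrixP => i j; rewrite !mxE.
by rewrite row_permE det_mulmx det_perm.
Qed.

Lemma ev_inj (U : {set 'I_n}) (i j : nat) : (i < #|U|)%N -> (j < #|U|)%N ->
  ev U i = ev U j -> i = j.
Proof.
move=> hi hj; rewrite /ev => e; apply/eqP; rewrite -(nth_uniq x0 _ _ (enum_uniq (mem U))) ?e //.
  by rewrite -cardE.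
by rewrite -cardE.
Qed.

Lemma ev_in (U : {set 'I_n}) (i : nat) : (i < #|U|)%N -> ev U i \in U.
Proof. by move=> hi; rewrite /ev -mem_enum mem_nth // -cardE. Qed.

Lemma CauchyBinet k (A : 'M[R]_(k, n)) (B : 'M[R]_(n, k)) :
  \det (A *m B) = \sum_(U : {set 'I_n} | #|U| == k)
     \det (\matrix_(i, j) A i (ev U j)) * \det (\matrix_(i, j) B (ev U i) j).
Proof.
rewrite det_mul_expand.
rewrite (bigID (fun f : ('I_n ^ k)%type => injectiveb f)) /= [X in _ + X]big1 ?addr0; last first.
  move=> f /injectivePn [i1 [i2 Di12 Ef12]].
  by rewrite (determinant_alternate Di12) ?mulr0 // => j; rewrite !mxE Ef12.
rewrite (partition_big (fun f : ('I_n ^ k)%type => [set f i | i in 'I_k]) (fun U => #|U| == k)) /=;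
  last by move=> f /injectiveP fi; rewrite card_imset // card_ord.
apply: eq_bigr => U /eqP cardU.
pose h (s : 'S_k) : ('I_n ^ k)%type := [ffun i => ev U (s i)].
pose h' (f : ('I_n ^ k)%type) : 'S_k :=
  insubd (1%g : 'S_k) ([ffun i : 'I_k => (insubd i (index (f i) (enum U)) : 'I_k)] : {ffun 'I_k -> 'I_k}).
have hidx : forall f : ('I_n ^ k)%type, [set f i | i in 'I_k] == U -> forall i,
    (index (f i) (enum U) < k)%N.
  move=> f /eqP fU i; suff: (index (f i) (enum U) < #|U|)%N by rewrite cardU.
  rewrite cardE index_mem mem_enum -fU.
  by apply/imsetP; exists i.
have hh' : forall f : ('I_n ^ k)%type, injectiveb f && ([set f i | i in 'I_k] == U) -> h (h' f) = f.
  move=> f /andP [fi fU]; apply/ffunP => i; rewrite ffunE /h'.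
  set F := [ffun i => _].
  have FI : injectiveb F.
    apply/injectiveP => i1 i2; rewrite !ffunE => e.
    have := congr1 val e; rewrite !val_insubd !hidx // => e2.
    apply: (injectiveP _ fi).
    have : nth x0 (enum U) (index (f i1) (enum U)) = nth x0 (enum U) (index (f i2) (enum U)) by rewrite e2.
    move/eqP: fU => <-.
    by rewrite !nth_index // mem_enum; apply/imsetP; [exists i2 | exists i1].
  have -> : (insubd (1%g : 'S_k) F : 'S_k) i = F i by rewrite -pvalE insubdK.
  rewrite ffunE /ev val_insubd hidx // nth_index // mem_enum.
  by move/eqP: fU => <-; apply/imsetP; exists i.
have hinj : injective h.
  move=> s1 s2 e; apply/permP => i.
  have := congr1 (fun f : ('I_n ^ k)%type => f i) e; rewrite /h !ffunE.
  by move/ev_inj; rewrite cardU => /(_ (ltn_ord _) (ltn_ord _)) /val_inj.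
have hinjb : forall s, injectiveb (h s).
  move=> s; apply/injectiveP => i1 i2; rewrite !ffunE.
  by move/ev_inj; rewrite cardU => /(_ (ltn_ord _) (ltn_ord _)) /val_inj /perm_inj.
have hU : forall s, [set h s i | i in 'I_k] == U.
  move=> s; rewrite eqEcard card_imset; last exact/injectiveP.
  rewrite card_ord cardU leqnn andbT; apply/subsetP => y /imsetP [i _ ->].
  by rewrite ffunE ev_in // cardU.
rewrite (reindex_onto h h' hh').
rewrite (eq_bigl predT); last first.
  by move=> s; rewrite hinjb hU /=; apply/eqP/hinj; rewrite hh' // hinjb hU.
have -> : \det (\matrix_(i, j) A i (ev U j)) = \sum_(s : 'S_k) (-1) ^+ s * \prod_i A i (ev U (s i)).
  by rewrite /determinant; apply: eq_bigr => s _; congr (_ * _); apply: eq_bigr => i _; rewrite mxE.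
rewrite big_distrl /=; apply: eq_bigr => s _.
rewrite -mulrA mulrCA -det_row_permE; congr (_ * _).
  by apply: eq_bigr => i _; rewrite ffunE.
by congr (\det _); apply/matrixP => i j; rewrite !mxE ffunE.
Qed.


Lemma det_size m m' (M : 'M[R]_m) (F : nat -> nat -> R) : m = m' ->
  (forall i j : 'I_m, M i j = F i j) -> \det M = \det (\matrix_(i < m', j < m') F i j).
Proof. by move=> e; subst m' => h; congr (\det _); apply/matrixP => i j; rewrite mxE h. Qed.

Definition Kc (A : 'M[R]_n) (S T : {set 'I_n}) : R :=
  if #|S| == #|T| then \det (\matrix_(a < #|T|, b < #|T|) A (ev S a) (ev T b)) else 0.

Lemma Kc_mul (A B : 'M[R]_n) S T : Kc (A *m B) S T = \sum_U Kc A S U * Kc B U T.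
Proof.
rewrite /Kc; case: eqP => hST; last first.
  rewrite big1 // => U _; case: eqP => h1; case: eqP => h2; rewrite ?mul0r ?mulr0 //.
  by case: hST; rewrite h1 h2.
have -> : \matrix_(a < #|T|, b < #|T|) (A *m B) (ev S a) (ev T b) =
   (\matrix_(a < #|T|, j < n) A (ev S a) j) *m (\matrix_(j < n, b < #|T|) B j (ev T b)).
  by apply/matrixP => a b; rewrite !mxE; apply: eq_bigr => j _; rewrite !mxE.
rewrite CauchyBinet [X in _ = X](bigID (fun U : {set 'I_n} => #|U| == #|T|)) /= [X in _ = _ + X]big1 ?addr0; last first.
  by move=> U /negbTE h; rewrite h mulr0.
apply: eq_bigr => U /eqP hU; rewrite hST hU eqxx.
by congr (_ * _); congr (\det _); apply/matrixP => i j; rewrite !mxE.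
Qed.

Lemma Kc_diag (A : 'M[R]_n) (d : 'I_n -> R) : (forall i j, A i j = (i == j)%:R * d i) ->
  forall S T, Kc A S T = (S == T)%:R * \prod_(i in S) d i.
Proof.
move=> hA S T; rewrite /Kc; case: (eqVneq S T) => [<-|nST].
  rewrite eqxx mul1r.
  have -> : \matrix_(a < #|S|, b < #|S|) A (ev S a) (ev S b) = diag_mx (\row_(a < #|S|) d (ev S a)).
    apply/matrixP => a b; rewrite !mxE hA.
    case: (eqVneq a b) => [->|nab]; first by rewrite eqxx mul1r mulr1n.
    rewrite mulr0n; case: eqP => [/ev_inj|]; last by rewrite mul0r.
    by rewrite !ltn_ord => /(_ isT isT) /val_inj /eqP; rewrite (negbTE nab).
  rewrite det_diag (big_enum_val (A := mem S)) /=; apply: eq_bigr => i _.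
  by rewrite mxE /ev (enum_val_nth x0).
rewrite mul0r; case: eqP => // hST.
have : ~~ (S \subset T).
  apply/negP => sST; move/negP: nST; apply; rewrite eqEcard sST /= hST leqnn //.
case/subsetPn => s sS snT.
have ha : (index s (enum S) < #|T|)%N by rewrite -hST cardE index_mem mem_enum.
rewrite (expand_det_row _ (Ordinal ha)) big1 // => b _; rewrite !mxE hA.
have -> : ev S (Ordinal ha) = s by rewrite /ev /= nth_index // mem_enum.
case: eqP => [e|]; last by rewrite !mul0r.
have : ev T b \in T by rewrite ev_in. by rewrite -e (negbTE snT).
Qed.

End CBsec.

Section CSec.
Variable C : numClosedFieldType.
Variable n : nat.
Variable x0 : 'I_n.
Local Notation K := (@Kc C n x0).

Lemma Kc_adj (A : 'M[C]_n) S T : K (adjmx A) S T = (K A T S)^*.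
Proof.
rewrite /Kc eq_sym; case: eqP => h; last by rewrite rmorph0.
rewrite -det_map_mx -[in RHS]det_tr; symmetry.
apply: (det_size (F := fun a b => adjmx A (ev x0 S a) (ev x0 T b))) => // i j.
by rewrite !mxE.
Qed.

Lemma wedge_Kc (u : 'M[C]_n) x S : wedge_map u x S = \sum_T x T * K u S T.
Proof.
apply: eq_bigr => T _; congr (_ * _); rewrite /wedge /Kc; case: eqP => // h.
congr (\det _); apply/matrixP => a b; rewrite !mxE.
have ha : (a < size (enum S))%N by rewrite -cardE h.
rewrite /sorted_elems (nth_map x0) // /vec_at valK !mxE /ev (enum_val_nth x0) //.
Qed.


Lemma prod_diff (I : Type) (r : seq I) (P : pred I) (a b : I -> C) :
  (forall i, `|a i| <= 1) -> (forall i, `|b i| <= 1) ->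
  `|\prod_(i <- r | P i) a i - \prod_(i <- r | P i) b i| <= \sum_(i <- r | P i) `|a i - b i|.
Proof.
move=> ha hb; elim: r => [|i r IH]; first by rewrite !big_nil subrr normr0.
rewrite !big_cons; case: (P i) => //.
set p := \prod_(j <- r | P j) a j; set q := \prod_(j <- r | P j) b j.
have hq : `|q| <= 1.
  by rewrite normr_prod; apply: prodr_ile1 => j _; rewrite normr_ge0 hb.
have -> : a i * p - b i * q = a i * (p - q) + (a i - b i) * q.
  by rewrite mulrBr mulrBl addrA subrK.
apply: le_trans (ler_normD _ _) _; rewrite !normrM addrC; apply: lerD.
  by rewrite -[X in _ <= X]mulr1; apply: ler_wpM2l.
apply: le_trans IH; rewrite -[X in _ <= X]mul1r; exact: ler_wpM2r.
Qed.

Definition N2 (y : fock C n) := \sum_S `|y S| ^+ 2.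
Definition Kapp (M : {set 'I_n} -> {set 'I_n} -> C) (y : fock C n) : fock C n :=
  fun S => \sum_T M S T * y T.

Lemma N2_ge0 y : 0 <= N2 y.
Proof. by apply: sumr_ge0 => S _; rewrite exprn_ge0. Qed.

Lemma K1 S T : K 1%:M S T = (S == T)%:R.
Proof.
rewrite (@Kc_diag _ _ x0 _ (fun _ => 1)); last by move=> i j; rewrite !mxE mulr1.
by rewrite big1_eq mulr1.
Qed.

Lemma N2_unitary (L : 'M[C]_n) y : unitary L -> N2 (Kapp (K L) y) = N2 y.
Proof.
case=> _ HL.
have orth : forall T T', \sum_S (K L S T')^* * K L S T = (T' == T)%:R.
  by move=> T T'; rewrite -K1 -HL Kc_mul; apply: eq_bigr => S _; rewrite Kc_adj.
rewrite /N2 /Kapp.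
transitivity (\sum_S \sum_T \sum_T' (K L S T * y T) * (K L S T' * y T')^*).
  apply: eq_bigr => S _; rewrite normCK rmorph_sum big_distrl /=.
  by apply: eq_bigr => T _; rewrite big_distrr.
rewrite exchange_big; apply: eq_bigr => T _ /=; rewrite exchange_big /=.
transitivity (\sum_T' (y T * (y T')^*) * \sum_S (K L S T')^* * K L S T).
  apply: eq_bigr => T' _; rewrite big_distrr; apply: eq_bigr => S _ /=.
  by rewrite rmorphM /=; ring.
rewrite (eq_bigr (fun T' => y T * (y T')^* * (T' == T)%:R)); last by move=> T' _; rewrite orth.
rewrite (bigD1 T) //= big1 ?addr0; first by rewrite eqxx mulr1 normCK.
by move=> T' /negbTE ->; rewrite mulr0.
Qed.


Lemma Kc_LDR (L R : 'M[C]_n) (d : 'I_n -> C) S T :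
  K (L *m diag_mx (\row_k d k) *m R) S T = \sum_U K L S U * (\prod_(i in U) d i) * K R U T.
Proof.
rewrite Kc_mul; apply: eq_bigr => U _; rewrite Kc_mul (bigD1 U) //= big1 ?addr0.
  by rewrite (@Kc_diag _ _ x0 (diag_mx (\row_k d k)) d) ?eqxx ?mul1r // => i j; rewrite !mxE; case: eqP => _; rewrite ?mulr1n ?mulr0n ?mul1r ?mul0r.
move=> V nVU; rewrite (@Kc_diag _ _ x0 (diag_mx (\row_k d k)) d) ?(negbTE nVU) ?mul0r ?mulr0 //.
by move=> i j; rewrite !mxE; case: eqP => _; rewrite ?mulr1n ?mulr0n ?mul1r ?mul0r.
Qed.

Lemma main_x0 (u L R : 'M[C]_n) (sigma eps : 'I_n -> C)
    (HL : unitary L) (HR : unitary R)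
    (Hsvd : u = L *m diag_mx (\row_k sigma k) *m R)
    (Hsig01 : forall j, 0 <= sigma j <= 1)
    (Hsigt01 : forall j, 0 <= sigma j + eps j <= 1) :
  let ut : 'M[C]_n :=
    \matrix_(i < n, j < n) \sum_(k < n) (sigma k + eps k) * L i k * R k j in
  forall x : fock C n,
    fock_norm (fun S => wedge_map u x S - wedge_map ut x S)
      <= (\sum_(j < n) `|eps j|) * fock_norm x.
Proof.
move=> ut x.
have Hut : ut = L *m diag_mx (\row_k (sigma k + eps k)) *m R.
  apply/matrixP => i j; rewrite !mxE; apply: eq_bigr => k _.
  rewrite mul_mx_diag !mxE; ring.
set c := \sum_(j < n) `|eps j|.
have c0 : 0 <= c by apply: sumr_ge0 => j _.
pose d (U : {set 'I_n}) := \prod_(i in U) sigma i.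
pose dt (U : {set 'I_n}) := \prod_(i in U) (sigma i + eps i).
pose y := Kapp (K R) x.
pose w : fock C n := fun U => (d U - dt U) * y U.
have hdiff : forall S, wedge_map u x S - wedge_map ut x S = Kapp (K L) w S.
  move=> S; rewrite !wedge_Kc.
  transitivity (\sum_T \sum_U x T * (K L S U * (d U - dt U) * K R U T)).
    rewrite -sumrB; apply: eq_bigr => T _; rewrite Hsvd Hut !Kc_LDR -mulrBr -sumrB big_distrr.
    by apply: eq_bigr => U _ /=; rewrite /d /dt; ring.
  rewrite exchange_big /Kapp; apply: eq_bigr => U _ /=; rewrite /w /y /Kapp mulrA big_distrr /=.
  by apply: eq_bigr => T _; ring.
have hd : forall U, `|d U - dt U| <= c.
  move=> U; apply: le_trans (prod_diff _ _ _ _) _.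
  - by move=> i; case/andP: (Hsig01 i) => h0 h1; rewrite ger0_norm.
  - by move=> i; case/andP: (Hsigt01 i) => h0 h1; rewrite ger0_norm.
  rewrite [X in _ <= X](bigID (mem U)) /= -[X in X <= _]addr0; apply: lerD.
    by apply: ler_sum => i _; rewrite opprD addNKr normrN.
  by apply: sumr_ge0.
have hN : N2 w <= c ^+ 2 * N2 x.
  rewrite -(N2_unitary x HR) /N2 mulr_sumr; apply: ler_sum => U _.
  rewrite /w normrM exprMn; apply: ler_wpM2r; first exact: exprn_ge0.
  by rewrite !expr2; apply: ler_pM.
rewrite /fock_norm (eq_bigr (fun S => `|Kapp (K L) w S| ^+ 2)); last by move=> S _; rewrite hdiff.
rewrite -(sqrCK c0) -sqrtCM ?nnegrE ?exprn_ge0 ?N2_ge0 //.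
rewrite ler_sqrtC ?nnegrE ?mulr_ge0 ?exprn_ge0 ?N2_ge0 //.
by have := N2_unitary w HL; rewrite /N2 => ->.
Qed.

End CSec.

Theorem mainTheorem1 (C : numClosedFieldType) (n : nat)
    (u L R : 'M[C]_n) (sigma eps : 'I_n -> C)
    (HL : unitary L) (HR : unitary R)
    (Hsvd : u = L *m diag_mx (\row_k sigma k) *m R)
    (Hsig01 : forall j, 0 <= sigma j <= 1)
    (Hsigdec : forall i j : 'I_n, (i <= j)%N -> sigma j <= sigma i)
    (Heps_real : forall j, eps j \is Num.real)
    (Hsigt01 : forall j, 0 <= sigma j + eps j <= 1) :
  let ut : 'M[C]_n :=
    \matrix_(i < n, j < n) \sum_(k < n) (sigma k + eps k) * L i k * R k j in
  forall x : fock C n,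
    fock_norm (fun S => wedge_map u x S - wedge_map ut x S)
      <= (\sum_(j < n) `|eps j|) * fock_norm x.
Proof.
case: (posnP n) => [n0|npos]; last exact: (main_x0 (Ordinal npos) HL HR Hsvd Hsig01 Hsigt01).
move=> ut x.
have eq : ut = u by apply/matrixP => i; have := ltn_ord i; rewrite {2}n0.
rewrite /fock_norm big1 ?sqrtC0; last by move=> S _; rewrite eq subrr normr0 expr0n.
apply: mulr_ge0; first by apply: sumr_ge0.
by rewrite sqrtC_ge0; apply: sumr_ge0 => S _; rewrite exprn_ge0.
Qed.
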